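(* Let $L$ be a powerful Lie ring of cardinality $p^{n}$. Then $L^{n+1}=0$.
   Context: A finite Lie ring $L$ of $p$-power order is powerful if $p>2$ and $L^{2}\le pL$, or $p=2$ and $L^{2}\le 4L$. The lower central series is $L^{1}=L$, $L^{k+1}=[L,L^{k}]$ (additive span of brackets). *)

(* Defs.v *)
From HB Require Import structures.
From mathcomp Require Import all_boot all_order all_algebra.
Set Implicit Arguments. Unset Strict Implicit. Unset Printing Implicit Defensive.
Import GRing.Theory.
Local Open Scope ring_scope.

Definition lie_ring_axioms (L : zmodType) (br : L -> L -> L) : Prop :=
  [/\ (forall x y z, br (x + y) z = br x z + br y z),
      (forall x y z, br x (y + z) = br x y + br x z),
      (forall x, br x x = 0) &
      (forall x y z, br x (br y z) + br y (br z x) + br z (br x y) = 0)].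

Definition is_addsubgroup (L : finZmodType) (A : {set L}) : bool :=
  [&& 0 \in A & [forall x in A, forall y in A, x - y \in A]].

Definition addspan (L : finZmodType) (S : {set L}) : {set L} :=
  [set x | [forall A : {set L}, (S \subset A) && is_addsubgroup A ==> (x \in A)]].

Definition lie_bracket_set (L : finZmodType) (br : L -> L -> L)
  (A B : {set L}) : {set L} :=
  addspan [set br a b | a in A, b in B].

(* Lower central series: lcs br 1 = L, lcs br (k+1) = [L, lcs br k].
   (lcs br 0 is also set to L; it is not used.) *)
Fixpoint lcs (L : finZmodType) (br : L -> L -> L) (k : nat) : {set L} :=
  match k with
  | 0 | 1 => [set: L]
  | k'.+1 => lie_bracket_set br [set: L] (lcs br k')
  end.

Definition mult_set (L : finZmodType) (m : nat) : {set L} :=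
  [set x *+ m | x in [set: L]].

Definition powerful (L : finZmodType) (br : L -> L -> L) (p : nat) : Prop :=
  ((2 < p)%N /\ lcs br 2 \subset mult_set L p) \/
  (p = 2 /\ lcs br 2 \subset mult_set L 4).

(* Main.v *)
Require Import Defs.
From mathcomp Require Import all_boot all_order all_algebra.
From mathcomp Require Import all_fingroup all_solvable.
Import GRing.Theory.
Local Open Scope ring_scope.

Section Aux.
Variable (L : finZmodType).

Lemma addspan_min (S A : {set L}) :
  S \subset A -> is_addsubgroup A -> addspan S \subset A.
Proof.
move=> SA hA; apply/subsetP=> x; rewrite inE => /forallP /(_ A).
by rewrite SA hA => /implyP; apply.
Qed.

Lemma addspan_sub (S : {set L}) : S \subset addspan S.
Proof.
apply/subsetP=> x xS; rewrite inE; apply/forallP=> A; apply/implyP.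
by case/andP=> /subsetP h _; apply: h.
Qed.

Lemma addspan0 (S : {set L}) : (0 : L) \in addspan S.
Proof.
rewrite inE; apply/forallP=> A; apply/implyP.
by case/andP=> _ /andP[].
Qed.

Lemma mult_set_sub m : is_addsubgroup (mult_set L m).
Proof.
apply/andP; split.
  by apply/imsetP; exists 0; rewrite ?inE ?mul0rn.
apply/forallP=> x; apply/implyP=> /imsetP[a _ ->].
apply/forallP=> y; apply/implyP=> /imsetP[b _ ->].
by apply/imsetP; exists (a - b); rewrite ?inE // mulrnBl.
Qed.

Lemma in_mult_set m x : (x \in mult_set L m) = [exists y, x == y *+ m].
Proof.
apply/imsetP/existsP => [[y _ ->]|[y /eqP ->]]; first by exists y.
by exists y; rewrite ?inE.
Qed.
End Aux.

Theorem lemma2p3 (L : finZmodType) (br : L -> L -> L) (p n : nat) :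
  lie_ring_axioms br -> prime p -> #|L| = (p ^ n)%N ->
  powerful br p ->
  lcs br n.+1 = [set 0 : L].
Proof.
move=> [brDl brDr brxx jac] pp cardL pw.
have brn x y m : br x (y *+ m) = (br x y) *+ m.
  elim: m => [|m IH].
    by rewrite !mulr0n; apply: (addrI (br x 0)); rewrite addr0 -brDr addr0.
  by rewrite !mulrS brDr IH.
have L2 : lcs br 2 \subset mult_set L p.
  case: pw => [[_ //]|[-> h]]; apply: (subset_trans h); apply/subsetP=> x.
  rewrite !in_mult_set => /existsP[y /eqP ->]; apply/existsP; exists (y *+ 2).
  by rewrite -mulrnA.
have key k : lcs br k.+1 \subset mult_set L (p ^ k).
  elim: k => [|k IH].
    by apply/subsetP=> x _; rewrite in_mult_set; apply/existsP; exists x.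
  case: k IH => [|k] IH; first by rewrite expn1.
  rewrite [lcs br _]/=; apply: addspan_min; last exact: mult_set_sub.
  apply/subsetP=> z /imset2P[a b _ bin ->].
  have := subsetP IH b bin; rewrite in_mult_set => /existsP[y /eqP ->].
  rewrite brn.
  have : br a y \in lcs br 2.
    rewrite /= /lie_bracket_set; apply: (subsetP (@addspan_sub L _)); apply/imset2P; exists a y; by rewrite ?inE.
  move/(subsetP L2); rewrite !in_mult_set => /existsP[w /eqP ->].
  by apply/existsP; exists w; rewrite -mulrnA -expnS.
apply/eqP; rewrite eqEsubset; apply/andP; split.
  apply/subsetP=> x /(subsetP (key n)); rewrite in_mult_set => /existsP[y /eqP ->].
  rewrite -cardL -FinRing.zmodXgE inE.
  have := expg_cardG (in_setT y); rewrite cardsT => ->; done.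
rewrite sub1set; case: n {cardL key} => [|n]; first by rewrite /= inE.
exact: (@addspan0 L).
Qed.
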